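(* Let $(\Omega,+)$ be a group and $x,a,y,b,z\subseteq\Omega$ arbitrary subsets. Then: (1) $\Gamma(b,z,y,x,a)=-\Gamma(x,a,y,b,z)$, $\Gamma(z,b,y,a,x)=\check\Gamma(x,a,y,b,z)$ and $\Gamma(a,x,y,z,b)=-\check\Gamma(x,a,y,b,z)$; and if $x,a,y,b,z$ are all symmetric subsets, then $\Gamma(x,a,y,b,z)=\Gamma(a,x,y,z,b)$. (2) For each $\sigma$ in the Klein group $\{\mathrm{id},(\xi\omega)(\zeta\eta),(\xi\eta)(\zeta\omega),(\xi\zeta)(\eta\omega)\}$ of permutations of the six letters, one has $\sigma.\mathbf\Gamma=\mathbf\Gamma^{s}$ for a sign vector $s$ whose entries in the $\xi,\zeta,\eta,\omega$ positions are all $+1$; i.e. if signed versions differing only by sign changes in $\alpha$ or $\beta$ are regarded as equivalent, the equivalence class of $\mathbf\Gamma$ is invariant under this Klein group.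
   Context: $(\Omega,+)$ is a group written additively but not necessarily abelian. $\Gamma(x,a,y,b,z)=\{\omega:\exists\alpha\in a,\beta\in b:\ \alpha+\omega+\beta\in y,\ \alpha+\omega\in z,\ \omega+\beta\in x\}$, $\check\Gamma(x,a,y,b,z)=\{\omega:\exists\alpha\in a,\beta\in b:\ \beta+\omega+\alpha\in y,\ \omega+\alpha\in z,\ \beta+\omega\in x\}$; for a subset $u$, $-u=\{-\mu:\mu\in u\}$, and $u$ is symmetric if $-u=u$. The structure space is $\mathbf\Gamma=\{(\xi,\zeta,\alpha,\beta,\eta,\omega)\in\Omega^6:\ \eta=\alpha+\omega+\beta,\ \zeta=\alpha+\omega,\ \xi=\omega+\beta\}$. For a sign vector $s=(s_1,\dots,s_6)\in\{\pm1\}^6$, $\mathbf\Gamma^s=\{(\xi,\zeta,\alpha,\beta,\eta,\omega): (s_1\xi,s_2\zeta,s_3\alpha,s_4\beta,s_5\eta,s_6\omega)\in\mathbf\Gamma\}$. For a permutation $\sigma$ of the letters $\{\xi,\zeta,\alpha,\beta,\eta,\omega\}$, $\sigma.\mathbf\Gamma$ is the set of $(\xi,\zeta,\alpha,\beta,\eta,\omega)\in\Omega^6$ satisfying the equations obtained by renaming each letter $v$ to $\sigma(v)$, namely $\sigma(\eta)=\sigma(\alpha)+\sigma(\omega)+\sigma(\beta)$, $\sigma(\zeta)=\sigma(\alpha)+\sigma(\omega)$, $\sigma(\xi)=\sigma(\omega)+\sigma(\beta)$. *)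

(* Defs.v *)
From Stdlib Require Import List.
Import ListNotations.

Record IsGroup {G : Type} (add : G -> G -> G) (opp : G -> G) (zero : G) : Prop := {
  grp_assoc : forall u v w, add u (add v w) = add (add u v) w;
  grp_zero_l : forall u, add zero u = u;
  grp_zero_r : forall u, add u zero = u;
  grp_opp_l : forall u, add (opp u) u = zero;
  grp_opp_r : forall u, add u (opp u) = zero }.

Definition subset (G : Type) := G -> Prop.

Definition set_eq {G : Type} (A B : subset G) : Prop := forall w, A w <-> B w.

Definition neg_set {G : Type} (opp : G -> G) (u : subset G) : subset G :=
  fun w => exists mu, u mu /\ w = opp mu.

Definition symmetric_set {G : Type} (opp : G -> G) (u : subset G) : Prop :=
  set_eq (neg_set opp u) u.

Definition Gamma {G : Type} (add : G -> G -> G) (x a y b z : subset G) : subset G :=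
  fun w => exists al be, a al /\ b be /\ y (add (add al w) be) /\
                         z (add al w) /\ x (add w be).

Definition Gamma_check {G : Type} (add : G -> G -> G) (x a y b z : subset G) : subset G :=
  fun w => exists al be, a al /\ b be /\ y (add (add be w) al) /\
                         z (add w al) /\ x (add be w).

(* The six letters xi, zeta, alpha, beta, eta, omega; a point of Omega^6 is a
   function from letters to Omega. *)
Inductive letter := Xi | Zeta | Alpha | Beta | Eta | Omega.

Definition StructGamma {G : Type} (add : G -> G -> G) (v : letter -> G) : Prop :=
  v Eta = add (add (v Alpha) (v Omega)) (v Beta) /\
  v Zeta = add (v Alpha) (v Omega) /\
  v Xi = add (v Omega) (v Beta).

Inductive sign := Plus | Minus.
Definition sign_act {G : Type} (opp : G -> G) (s : sign) (g : G) : G :=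
  match s with Plus => g | Minus => opp g end.

Definition StructGamma_signed {G : Type} (add : G -> G -> G) (opp : G -> G)
  (s : letter -> sign) (v : letter -> G) : Prop :=
  StructGamma add (fun l => sign_act opp (s l) (v l)).

Definition StructGamma_perm {G : Type} (add : G -> G -> G)
  (sigma : letter -> letter) (v : letter -> G) : Prop :=
  StructGamma add (fun l => v (sigma l)).

Definition perm_id (l : letter) : letter := l.
Definition perm_xo_ze (l : letter) : letter :=
  match l with Xi => Omega | Omega => Xi | Zeta => Eta | Eta => Zeta | l => l end.
Definition perm_xe_zo (l : letter) : letter :=
  match l with Xi => Eta | Eta => Xi | Zeta => Omega | Omega => Zeta | l => l end.
Definition perm_xz_eo (l : letter) : letter :=
  match l with Xi => Zeta | Zeta => Xi | Eta => Omega | Omega => Eta | l => l end.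

Definition klein_group : list (letter -> letter) :=
  [perm_id; perm_xo_ze; perm_xe_zo; perm_xz_eo].

(* Main.v *)
Require Import Defs.
From Stdlib Require Import List.

Section Grp.
Context {G : Type} (add : G -> G -> G) (opp : G -> G) (zero : G)
  (HG : IsGroup add opp zero).

Lemma g_assoc' u v w : add (add u v) w = add u (add v w).
Proof. symmetry; apply (grp_assoc _ _ _ HG). Qed.
Lemma g_zl u : add zero u = u. Proof. apply (grp_zero_l _ _ _ HG). Qed.
Lemma g_zr u : add u zero = u. Proof. apply (grp_zero_r _ _ _ HG). Qed.
Lemma g_ol u : add (opp u) u = zero. Proof. apply (grp_opp_l _ _ _ HG). Qed.
Lemma g_or u : add u (opp u) = zero. Proof. apply (grp_opp_r _ _ _ HG). Qed.
Lemma g_kl u w : add (opp u) (add u w) = w.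
Proof. rewrite <- g_assoc', g_ol, g_zl; reflexivity. Qed.
Lemma g_kr u w : add u (add (opp u) w) = w.
Proof. rewrite <- g_assoc', g_or, g_zl; reflexivity. Qed.
Lemma g_inv p q : add p q = zero -> p = opp q.
Proof.
  intro H. rewrite <- (g_zr p), <- (g_or q), <- g_assoc', H, g_zl. reflexivity.
Qed.
Lemma g_oppK u : opp (opp u) = u.
Proof. symmetry; apply g_inv, g_or. Qed.
Lemma g_oppD u v : opp (add u v) = add (opp v) (opp u).
Proof.
  symmetry; apply g_inv. rewrite g_assoc', (g_kl u v), g_ol. reflexivity.
Qed.
Lemma g_opp0 : opp zero = zero.
Proof. rewrite <- (g_zl (opp zero)), g_or. reflexivity. Qed.
End Grp.

Lemma mem_eq {G : Type} (u : G -> Prop) p q : u p -> p = q -> u q.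
Proof. intros H ->; exact H. Qed.

Ltac grp HG :=
  repeat (rewrite ?(g_assoc' _ _ _ HG), ?(g_zl _ _ _ HG), ?(g_zr _ _ _ HG),
            ?(g_ol _ _ _ HG), ?(g_or _ _ _ HG), ?(g_kl _ _ _ HG), ?(g_kr _ _ _ HG),
            ?(g_oppK _ _ _ HG), ?(g_oppD _ _ _ HG), ?(g_opp0 _ _ _ HG));
  reflexivity.

Ltac mem H HG := eapply mem_eq; [exact H | grp HG].

Theorem theorem9p8 (G : Type) (add : G -> G -> G) (opp : G -> G) (zero : G)
  (HG : IsGroup add opp zero) (x a y b z : subset G) :
  (* part (1) *)
  (set_eq (Gamma add b z y x a) (neg_set opp (Gamma add x a y b z)) /\
   set_eq (Gamma add z b y a x) (Gamma_check add x a y b z) /\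
   set_eq (Gamma add a x y z b) (neg_set opp (Gamma_check add x a y b z)) /\
   (symmetric_set opp x -> symmetric_set opp a -> symmetric_set opp y ->
    symmetric_set opp b -> symmetric_set opp z ->
    set_eq (Gamma add x a y b z) (Gamma add a x y z b))) /\
  (* part (2) *)
  (forall sigma : letter -> letter, In sigma klein_group ->
   exists s : letter -> sign,
     s Xi = Plus /\ s Zeta = Plus /\ s Eta = Plus /\ s Omega = Plus /\
     forall v : letter -> G,
       StructGamma_perm add sigma v <-> StructGamma_signed add opp s v).
Proof.
  split.
  - split; [|split; [|split]].
    + intro w; split.
      * intros (al & be & Ha & Hb & Hy & Hz & Hx).
        exists (opp w); split; [|grp HG].
        exists (add al w), (add w be).
        split; [mem Hz HG|]. split; [mem Hx HG|]. split; [mem Hy HG|].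
        split; [mem Ha HG| mem Hb HG].
      * intros (mu & (al & be & Ha & Hb & Hy & Hz & Hx) & ->).
        exists (add al mu), (add mu be).
        split; [mem Hz HG|]. split; [mem Hx HG|]. split; [mem Hy HG|].
        split; [mem Ha HG| mem Hb HG].
    + intro w; split.
      * intros (al & be & Ha & Hb & Hy & Hz & Hx).
        exists be, al; tauto.
      * intros (al & be & Ha & Hb & Hy & Hz & Hx).
        exists be, al; tauto.
    + intro w; split.
      * intros (al & be & Ha & Hb & Hy & Hz & Hx).
        exists (opp w); split; [|grp HG].
        exists (add w be), (add al w).
        split; [mem Hx HG|]. split; [mem Hz HG|]. split; [mem Hy HG|].
        split; [mem Hb HG| mem Ha HG].
      * intros (mu & (al & be & Ha & Hb & Hy & Hz & Hx) & ->).
        exists (add be mu), (add mu al).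
        split; [mem Hx HG|]. split; [mem Hz HG|]. split; [mem Hy HG|].
        split; [mem Hb HG| mem Ha HG].
    + intros Sx Sa Sy Sb Sz.
      assert (N : forall u : subset G, symmetric_set opp u -> forall p, u p -> u (opp p)).
      { intros u Su p Hp. apply Su. exists p; split; auto. }
      intro w; split.
      * intros (al & be & Ha & Hb & Hy & Hz & Hx).
        exists (opp (add w be)), (opp (add al w)).
        split; [mem (N _ Sx _ Hx) HG|]. split; [mem (N _ Sz _ Hz) HG|].
        split; [mem (N _ Sy _ Hy) HG|]. split; [mem (N _ Sb _ Hb) HG|].
        mem (N _ Sa _ Ha) HG.
      * intros (al & be & Ha & Hb & Hy & Hz & Hx).
        exists (opp (add w be)), (opp (add al w)).
        split; [mem (N _ Sa _ Hx) HG|]. split; [mem (N _ Sb _ Hz) HG|].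
        split; [mem (N _ Sy _ Hy) HG|]. split; [mem (N _ Sz _ Hb) HG|].
        mem (N _ Sx _ Ha) HG.
  - intros sigma Hs. simpl in Hs.
    destruct Hs as [<-|[<-|[<-|[<-|[]]]]].
    + exists (fun _ => Plus). repeat split; try reflexivity;
      intros; unfold StructGamma_perm, StructGamma_signed, StructGamma, perm_id, sign_act in *; cbn in *; tauto.
    + exists (fun l => match l with Beta => Minus | _ => Plus end).
      do 4 (split; [reflexivity|]); intro v;
      unfold StructGamma_perm, StructGamma_signed, StructGamma; cbn;
      split; intros (H1 & H2 & H3);
      (split; [|split]); try rewrite H1; try rewrite H2; try rewrite H3; grp HG.
    + exists (fun l => match l with Alpha => Minus | _ => Plus end).
      do 4 (split; [reflexivity|]); intro v;
      unfold StructGamma_perm, StructGamma_signed, StructGamma; cbn;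
      split; intros (H1 & H2 & H3);
      (split; [|split]); try rewrite H1; try rewrite H2; try rewrite H3; grp HG.
    + exists (fun l => match l with Alpha => Minus | Beta => Minus | _ => Plus end).
      do 4 (split; [reflexivity|]); intro v;
      unfold StructGamma_perm, StructGamma_signed, StructGamma; cbn;
      split; intros (H1 & H2 & H3);
      (split; [|split]); try rewrite H1; try rewrite H2; try rewrite H3; grp HG.
Qed.
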